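(* Let $X$ be an $n$-dimensional normed space over $\mathbb{K}\in\{\mathbb{R},\mathbb{C}\}$ and let $Y \subseteq X$ be a subspace of dimension $n-1$ satisfying $\lambda(Y, X)>1$. Let $T=\sum_{i=1}^{l}\alpha_i x_i \otimes f_i$ be a Chalmers–Metcalf operator for $Y$. If there is no non-zero $y \in Y$ with $f_i(y)=0$ for all $1 \leq i \leq l$, then the minimal projection $P: X \to Y$ is unique. In particular, the minimal projection is unique if the restriction $T|_Y:Y \to Y$ is invertible.
   Context: A projection onto $Y$ is a linear $P:X\to Y$ with $P|_Y=\mathrm{id}_Y$; $\lambda(Y,X)$ is the infimum of their operator norms and a minimal projection is one of norm $\lambda(Y,X)$. For $x\in X$, $f\in X^*$, $x\otimes f$ is the operator $z\mapsto f(z)x$. A Chalmers–Metcalf operator for $Y$ is an operator $T=\sum_{i=1}^{l}\alpha_i x_i\otimes f_i:X\to X$ with $(x_i,f_i)\in\mathrm{ext}\,B_X\times\mathrm{ext}\,B_{X^*}$, $\alpha_i>0$, $\sum_i\alpha_i=1$, $T(Y)\subseteq Y$, and $f_i(P_0(x_i))=\|P_0\|=\lambda(Y,X)$ for all $i$ and some fixed minimal projection $P_0:X\to Y$. *)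

(* Defs.v *)
(* Finite-dimensional normed spaces are modelled as
   'rV[K]_n equipped with an arbitrary norm N : 'rV[K]_n -> K. *)
From HB Require Import structures.
From mathcomp Require Import all_boot all_order all_algebra.
From mathcomp Require Import reals complex.
Set Implicit Arguments. Unset Strict Implicit. Unset Printing Implicit Defensive.
Import Order.TTheory GRing.Theory Num.Theory.
Local Open Scope ring_scope.

Section Defs.
Variables (K : numFieldType) (n : nat).

(* N is a norm on X = K^n (values are nonnegative, hence real, elements of K) *)
Definition is_norm (N : 'rV[K]_n -> K) : Prop :=
  [/\ forall x, 0 <= N x,
      forall x, N x = 0 -> x = 0,
      forall (a : K) x, N (a *: x) = `|a| * N x
    & forall x y, N (x + y) <= N x + N y].

Definition ballX (N : 'rV[K]_n -> K) (x : 'rV[K]_n) : Prop := N x <= 1.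

(* a functional f in X^* is represented by a column vector: f(z) = (z *m f) 0 0 *)
Definition app (f : 'cV[K]_n) (z : 'rV[K]_n) : K := (z *m f) 0 0.

Definition ballXs (N : 'rV[K]_n -> K) (f : 'cV[K]_n) : Prop :=
  forall z, N z <= 1 -> `|app f z| <= 1.

(* extreme points of a subset S of a K-vector space (0 < t < 1 forces t real) *)
Definition extreme (V : lmodType K) (S : V -> Prop) (x : V) : Prop :=
  S x /\ forall (y z : V) (t : K), S y -> S z -> 0 < t < 1 ->
    x = t *: y + (1 - t) *: z -> y = z.

(* operators X -> X are matrices acting on the right of row vectors *)
(* x (x) f : z |-> f(z) x *)
Definition tens (x : 'rV[K]_n) (f : 'cV[K]_n) : 'M[K]_n := f *m x.

Definition opnorm_bound (N : 'rV[K]_n -> K) (A : 'M[K]_n) (d : K) : Prop :=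
  forall x, N x <= 1 -> N (x *m A) <= d.
Definition is_opnorm (N : 'rV[K]_n -> K) (A : 'M[K]_n) (c : K) : Prop :=
  opnorm_bound N A c /\ forall d, opnorm_bound N A d -> c <= d.

Definition projection (Y P : 'M[K]_n) : Prop :=
  (P <= Y)%MS /\ forall y : 'rV[K]_n, (y <= Y)%MS -> y *m P = y.

Definition is_lambda (N : 'rV[K]_n -> K) (Y : 'M[K]_n) (l : K) : Prop :=
  (forall P c, projection Y P -> is_opnorm N P c -> l <= c) /\
  (forall d, (forall P c, projection Y P -> is_opnorm N P c -> d <= c) -> d <= l).

Definition minimal_projection (N : 'rV[K]_n -> K) (Y P : 'M[K]_n) : Prop :=
  projection Y P /\ exists l, is_lambda N Y l /\ is_opnorm N P l.

Definition chalmers_metcalf (N : 'rV[K]_n -> K) (Y : 'M[K]_n) (l : nat)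
    (alpha : 'I_l -> K) (xs : 'I_l -> 'rV[K]_n) (fs : 'I_l -> 'cV[K]_n)
    (P0 : 'M[K]_n) : Prop :=
  (forall i, extreme (ballX N) (xs i)) /\
  (forall i, extreme (ballXs N) (fs i)) /\
  (forall i, 0 < alpha i) /\
  \sum_(i < l) alpha i = 1 /\
  (Y *m (\sum_(i < l) alpha i *: tens (xs i) (fs i)) <= Y)%MS /\
  minimal_projection N Y P0 /\
  (exists c, [/\ is_opnorm N P0 c, is_lambda N Y c &
        forall i, app (fs i) (xs i *m P0) = c]).

End Defs.

(* Main.v *)
Require Import Defs.
From HB Require Import structures.
From mathcomp Require Import all_boot all_order all_algebra.
From mathcomp Require Import reals complex.
From mathcomp Require Import zify.
Import Order.TTheory GRing.Theory Num.Theory.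
Local Open Scope ring_scope.

Definition KP (K : numFieldType) : Prop :=
  forall (l : nat) (a z : 'I_l -> K) (c : K),
  (forall i, 0 < a i) -> \sum_(i < l) a i = 1 ->
  (forall i, `|z i| <= c) -> \sum_(i < l) a i * z i = c -> forall i, z i = c.

Lemma KP_closed (C : numClosedFieldType) : KP C.
Proof.
move=> l a z c apos asum zle zsum i.
have H : forall j, a j * z j = a j * c.
  move=> j; apply: (@normC_sum_upper C _ xpredT (fun j => a j * z j) (fun j => a j * c)) => //.
    move=> k _; rewrite normrM (gtr0_norm (apos k)) ler_pM2l //.
  by rewrite zsum -mulr_suml asum mul1r.
by apply: (mulfI (lt0r_neq0 (apos i))); rewrite H.
Qed.

Lemma KP_real (F : realFieldType) : KP F.
Proof.
move=> l a z c apos asum zle zsum i.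
have H : forall j, a j * (c - z j) = 0.
  move=> j; apply: (@psumr_eq0P F _ xpredT (fun j => a j * (c - z j))) => //.
    move=> k _; rewrite mulr_ge0 ?(ltW (apos k)) // subr_ge0.
    exact: le_trans (ler_norm _) (zle k).
  under eq_bigr do rewrite mulrBr.
  by rewrite sumrB zsum -mulr_suml asum mul1r subrr.
apply/eqP; rewrite eq_sym -subr_eq0; apply/eqP.
by move: (H i) => /eqP; rewrite mulf_eq0 (negbTE (lt0r_neq0 (apos i))) => /eqP.
Qed.

Lemma KP_HK' (R : realType) (K : numFieldType)
    (HK : K = (R : numFieldType) \/ K = (R[i] : numFieldType)) : KP K.
Proof.
case: HK => ->; [exact: KP_real | exact: KP_closed].
Qed.

Section Main.
Variables (K : numFieldType) (n : nat).
Implicit Types (N : 'rV[K]_n -> K).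

Lemma appD (f : 'cV[K]_n) z1 z2 : app f (z1 + z2) = app f z1 + app f z2.
Proof. by rewrite /app mulmxDl mxE. Qed.

Lemma appZ (f : 'cV[K]_n) (k : K) z : app f (k *: z) = k * app f z.
Proof. by rewrite /app -scalemxAl mxE. Qed.

Lemma mul_tens z (x : 'rV[K]_n) f : z *m tens x f = app f z *: x.
Proof. by rewrite /tens mulmxA [z *m f]mx11_scalar mul_scalar_mx. Qed.

Lemma lambda_uniq N Y a b : is_lambda N Y a -> is_lambda N Y b -> a = b.
Proof.
move=> [a1 a2] [b1 b2]; apply/le_anti; rewrite (b2 _ a1) (a2 _ b1) //.
Qed.

Lemma app_bound N f z (c : K) : is_norm N -> ballXs N f -> 0 < c -> N z <= c ->
  `|app f z| <= c.
Proof.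
move=> [N0 N1 NZ ND] fb c0 Nz.
have cn : c != 0 by rewrite gt_eqF.
have : `|app f (c^-1 *: z)| <= 1.
  apply: fb; rewrite NZ normfV (gtr0_norm c0).
  by rewrite -(mulVf cn) ler_pM2l // invr_gt0.
rewrite appZ normrM normfV (gtr0_norm c0) => H.
rewrite -(mulVKf cn `|app f z|); apply: (@le_trans _ _ (c * 1)); last by rewrite mulr1.
by rewrite ler_pM2l.
Qed.


Lemma main_uniq (KPK : KP K) N (Y : 'M[K]_n) (l : nat) (alpha : 'I_l -> K)
    (xs : 'I_l -> 'rV[K]_n) (fs : 'I_l -> 'cV[K]_n) (P0 : 'M[K]_n) :
  (0 < n)%N -> is_norm N -> \rank Y = n.-1 ->
  (exists lam, is_lambda N Y lam /\ 1 < lam) ->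
  chalmers_metcalf N Y alpha xs fs P0 ->
  (~ exists y : 'rV[K]_n, [/\ (y <= Y)%MS, y != 0 & forall i, app (fs i) y = 0]) ->
  forall P, minimal_projection N Y P -> P = P0.
Proof.
move=> n0 Nn rY [lam [lamY lam1]] [xext [fext [apos [asum [TY [minP0 [c [opc lamc fc]]]]]]]] noy.
move=> P [[PY Pid] [l' [lamY' opP]]].
have clam : c = lam by apply: lambda_uniq lamc lamY.
have c1 : 1 < c by rewrite clam.
have c0 : 0 < c by apply: lt_trans c1.
have l'c : l' = c by apply: lambda_uniq lamY' lamc.
rewrite l'c in opP.
have [[P0Y P0id] _] := minP0.
have Nx i : N (xs i) <= 1 by case: (xext i).
have fb i : ballXs N (fs i) by case: (fext i).
have xnY i : ~~ (xs i <= Y)%MS.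
  apply/negP => xY.
  have := fb i _ (Nx i); rewrite -(P0id _ xY) fc gtr0_norm // => H.
  by move: (lt_le_trans c1 H); rewrite ltxx.
have [i0 _] : exists i0 : 'I_l, true.
  case: (pickP (@predT 'I_l)) => [i0 _|H0]; first by exists i0.
  by move: asum; rewrite big_pred0 // => /eqP; rewrite eq_sym oner_eq0.
set w := xs i0.
have full : row_full (Y + w)%MS.
  have lt : (Y < Y + w)%MS.
    rewrite ltmxE addsmxSl /=; apply/negP => H.
    by move: (xnY i0); rewrite (submx_trans (addsmxSr Y w) H).
  have := rank_ltmx lt; rewrite rY /row_full => H1.
  have := rank_leq_col (Y + w)%MS; lia.
have decomp (x : 'rV[K]_n) : exists t : K, exists y : 'rV[K]_n, (y <= Y)%MS /\ x = y + t *: w.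
  have /sub_addsmxP [[u1 u2] /= ->] := submx_full x full.
  exists (u2 0 0), (u1 *m Y); split; first exact: submxMl.
  by rewrite {1}[u2]mx11_scalar mul_scalar_mx.
set D : 'M[K]_n := P - P0.
have yD (y : 'rV[K]_n) : (y <= Y)%MS -> y *m D = 0.
  by move=> yY; rewrite /D mulmxBr Pid // P0id // subrr.
set d : 'rV[K]_n := w *m D.
have dY : (d <= Y)%MS.
  rewrite /d /D mulmxBr; apply: addmx_sub.
    exact: submx_trans (submxMl _ _) PY.
  rewrite -scaleN1r; apply: scalemx_sub; exact: submx_trans (submxMl _ _) P0Y.
have xD (x : 'rV[K]_n) (t : K) (y : 'rV[K]_n) : (y <= Y)%MS -> x = y + t *: w -> x *m D = t *: d.
  by move=> yY ->; rewrite mulmxDl yD // add0r -scalemxAl.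
have [t Ht] := fin_all_exists (fun i => decomp (xs i)).
have [ys Hy] := fin_all_exists Ht.
have xiD i : xs i *m D = t i *: d by case: (Hy i) => yY e; apply: xD yY e.
have tn0 i : t i != 0.
  apply/negP => /eqP t0; case: (Hy i) => yY e.
  by move: (xnY i); rewrite e t0 scale0r addr0 yY.
set T := \sum_(i < l) alpha i *: tens (xs i) (fs i).
have dT : d *m T = \sum_(i < l) (alpha i * app (fs i) d) *: xs i.
  rewrite /T mulmx_sumr; apply: eq_bigr => i _.
  by rewrite -scalemxAr mul_tens scalerA.
set s := \sum_(i < l) alpha i * app (fs i) d * t i.
have sd : s *: d = 0.
  have dTY : (d *m T <= Y)%MS := submx_trans (submxMr T dY) TY.
  rewrite -(yD _ dTY) dT mulmx_suml /s scaler_suml; apply: eq_bigr => i _.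
  by rewrite -scalemxAl xiD scalerA.
case: (eqVneq d 0) => [d0|dn0].
  apply/eqP; rewrite -subr_eq0; apply/eqP; apply/row_matrixP => j.
  have [tj [yj [yjY ej]]] := decomp (row j 1%:M).
  by rewrite row0 -[D in row j D]mul1mx row_mul (xD _ _ _ yjY ej) -/d d0 scaler0.
have s0 : s = 0.
  by move/eqP: sd; rewrite scaler_eq0 (negbTE dn0) orbF => /eqP.
exfalso; apply: noy; exists d; split => // i.
have zP j : app (fs j) (xs j *m P) = c + t j * app (fs j) d.
  by rewrite -(subrK P0 P) -/D mulmxDr addrC appD fc xiD appZ.
have H := @KPK l alpha (fun j => app (fs j) (xs j *m P)) c apos asum
  (fun j => @app_bound N _ _ c Nn (fb j) c0 (opP.1 _ (Nx j))).
have : c + t i * app (fs i) d = c.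
  rewrite -zP; apply: H.
  under eq_bigr do rewrite zP mulrDr.
  rewrite big_split /= -mulr_suml asum mul1r.
  transitivity (c + s); last by rewrite s0 addr0.
  rewrite /s; congr (_ + _); apply: eq_bigr => j _.
  by rewrite mulrA mulrAC.
move/eqP; rewrite -subr_eq0 addrC addKr mulf_eq0 (negbTE (tn0 i)) /=.
by move/eqP.
Qed.

End Main.

Theorem mainTheorem17 (R : realType) (K : numFieldType)
    (HK : K = (R : numFieldType) \/ K = (R[i] : numFieldType))
    (n : nat) (N : 'rV[K]_n -> K) (Y : 'M[K]_n)
    (l : nat) (alpha : 'I_l -> K) (xs : 'I_l -> 'rV[K]_n) (fs : 'I_l -> 'cV[K]_n)
    (P0 : 'M[K]_n) :
  (0 < n)%N ->
  is_norm N ->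
  \rank Y = n.-1 ->
  (exists lam, is_lambda N Y lam /\ 1 < lam) ->
  chalmers_metcalf N Y alpha xs fs P0 ->
  let T := \sum_(i < l) alpha i *: tens (xs i) (fs i) in
  ((~ exists y : 'rV[K]_n, [/\ (y <= Y)%MS, y != 0 & forall i, app (fs i) y = 0]) ->
     forall P Q, minimal_projection N Y P -> minimal_projection N Y Q -> P = Q)
  /\
  (((forall y : 'rV[K]_n, (y <= Y)%MS -> exists2 z : 'rV[K]_n, (z <= Y)%MS & z *m T = y) /\
    (forall z1 z2 : 'rV[K]_n, (z1 <= Y)%MS -> (z2 <= Y)%MS -> z1 *m T = z2 *m T -> z1 = z2)) ->
     forall P Q, minimal_projection N Y P -> minimal_projection N Y Q -> P = Q).
Proof.
move=> n0 Nn rY hlam CM T.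
have KPK := @KP_HK' R K HK.
have part1 : (~ exists y : 'rV[K]_n, [/\ (y <= Y)%MS, y != 0 & forall i, app (fs i) y = 0]) ->
     forall P Q, minimal_projection N Y P -> minimal_projection N Y Q -> P = Q.
  move=> noy P Q hP hQ.
  by rewrite (@main_uniq K n KPK N Y l alpha xs fs P0 n0 Nn rY hlam CM noy P hP) (@main_uniq K n KPK N Y l alpha xs fs P0 n0 Nn rY hlam CM noy Q hQ).
split => //.
move=> [_ inj]; apply: part1 => -[y [yY yn0 fy]].
have yT : y *m T = 0 *m T.
  rewrite mul0mx /T mulmx_sumr big1 // => i _.
  by rewrite -scalemxAr mul_tens fy scale0r scaler0.
by move: yn0; rewrite (inj _ _ yY (sub0mx _ _) yT) eqxx.
Qed.
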